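(* Let $\boldsymbol{\mu}=(\mu_1,\dots,\mu_K)^T$, $\boldsymbol{\nu}=(\nu_1,\dots,\nu_K)^T$, $\boldsymbol{\kappa}=(\kappa_1,\dots,\kappa_K)^T\in\mathbb{R}^K$, let $\Delta^K=\{\boldsymbol{\lambda}\in\mathbb{R}^K:\sum_i\lambda_i=1,\ \lambda_i\ge0\}$, and let $$V=\max_{\boldsymbol{\lambda}\in\Delta^K}\left(\boldsymbol{\lambda}^T\boldsymbol{\kappa}-\boldsymbol{\lambda}^T\boldsymbol{\mu}\boldsymbol{\nu}^T\boldsymbol{\lambda}\right).$$ For $1\le i\le j\le K$ define $$q_{ij}(x)=\begin{cases}\dfrac{1}{\nu_j-\nu_i}\Big((x-\nu_i)(x-\nu_j)(\mu_i-\mu_j)+(x-\nu_i)(\kappa_j-\kappa_i-\mu_j\nu_j+\mu_i\nu_i)\Big)+\kappa_i-\mu_i\nu_i, & \mu_i\ne\mu_j\text{ and }\nu_i\ne\nu_j,\\ \kappa_i-\mu_i\nu_i, & \text{otherwise},\end{cases}$$ $$\tilde{\mu}_{ij}=\begin{cases}\left(\left(\dfrac{\kappa_j-\mu_j\nu_j-\kappa_i+\mu_i\nu_i}{2(\mu_j-\mu_i)}+\dfrac{\nu_i+\nu_j}{2}\right)\vee\underline{\nu}_{ij}\right)\wedge\overline{\nu}_{ij}, & \mu_i\ne\mu_j\text{ and }\nu_i\ne\nu_j,\\ \nu_i, & \text{otherwise},\end{cases}$$ with $\underline{\nu}_{ij}=\min\{\nu_i,\nu_j\}$, $\overline{\nu}_{ij}=\max\{\nu_i,\nu_j\}$.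 Then $$V=\max\Big\{\max_{1\le i\le K}\{\kappa_i-\mu_i\nu_i\},\ \max_{1\le i\le j\le K}q_{ij}(\tilde{\mu}_{ij})\Big\}.$$ Moreover, if there exists $i_0$ with $V=\kappa_{i_0}-\mu_{i_0}\nu_{i_0}$, then an optimal $\boldsymbol{\lambda}^*$ is given by $\lambda^*_{i_0}=1$ and $\lambda^*_j=0$ for $j\ne i_0$. Otherwise there exist $1\le i_0<j_0\le K$ with $V=q_{i_0j_0}(\tilde{\mu}_{i_0j_0})$, and an optimal $\boldsymbol{\lambda}^*$ is given by $$\lambda^*_{i_0}=\frac12-\frac{\kappa_{j_0}-\mu_{j_0}\nu_{j_0}-\kappa_{i_0}+\mu_{i_0}\nu_{i_0}}{2(\mu_{j_0}-\mu_{i_0})(\nu_{j_0}-\nu_{i_0})},\quad \lambda^*_{j_0}=1-\lambda^*_{i_0},\quad \lambda^*_j=0\ (j\ne i_0,j_0).$$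
   Context: $\vee$ and $\wedge$ denote max and min of real numbers. *)

(* Defs.v *)
From HB Require Import structures.
From mathcomp Require Import all_boot all_order all_algebra.
From mathcomp Require Import reals.
Set Implicit Arguments. Unset Strict Implicit. Unset Printing Implicit Defensive.
Import Order.TTheory GRing.Theory Num.Theory.
Local Open Scope ring_scope.

Section Defs.
Variables (R : realType) (K : nat).
Implicit Types (mu nu kappa lam : 'I_K -> R).

Definition in_simplex lam : Prop :=
  (\sum_(i < K) lam i = 1) /\ (forall i, 0 <= lam i).

Definition dotv (a b : 'I_K -> R) : R := \sum_(i < K) a i * b i.

Definition objective kappa mu nu lam : R :=
  dotv lam kappa - dotv lam mu * dotv nu lam.

Definition is_max_on_simplex (f : ('I_K -> R) -> R) (V : R) : Prop :=
  (exists lam, in_simplex lam /\ f lam = V) /\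
  (forall lam, in_simplex lam -> f lam <= V).

Definition optimal_point (f : ('I_K -> R) -> R) (V : R) lam : Prop :=
  in_simplex lam /\ f lam = V.

Definition vertex_val kappa mu nu (i : 'I_K) : R := kappa i - mu i * nu i.

Definition q_fun kappa mu nu (i j : 'I_K) (x : R) : R :=
  if (mu i != mu j) && (nu i != nu j) then
    (nu j - nu i)^-1 *
      ((x - nu i) * (x - nu j) * (mu i - mu j)
       + (x - nu i) * (kappa j - kappa i - mu j * nu j + mu i * nu i))
    + kappa i - mu i * nu i
  else kappa i - mu i * nu i.

Definition mu_tilde kappa mu nu (i j : 'I_K) : R :=
  if (mu i != mu j) && (nu i != nu j) then
    Num.min
      (Num.max
        ((kappa j - mu j * nu j - kappa i + mu i * nu i) / (2 * (mu j - mu i))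
          + (nu i + nu j) / 2)
        (Num.min (nu i) (nu j)))
      (Num.max (nu i) (nu j))
  else nu i.

(* W = max { max_i a_i , max_{i <= j} b_ij }, written out as the greatest
   element of this finite family *)
Definition is_max_candidates (a : 'I_K -> R) (b : 'I_K -> 'I_K -> R) (W : R)
  : Prop :=
  [/\ (forall i, a i <= W),
      (forall i j : 'I_K, (i <= j)%N -> b i j <= W) &
      ((exists i, W = a i) \/ (exists i j : 'I_K, (i <= j)%N /\ W = b i j))].

Definition unit_vec (i0 : 'I_K) : 'I_K -> R :=
  fun j => if j == i0 then 1 else 0.

Definition lam_star_i0 kappa mu nu (i0 j0 : 'I_K) : R :=
  2^-1 - (kappa j0 - mu j0 * nu j0 - kappa i0 + mu i0 * nu i0)
         / (2 * (mu j0 - mu i0) * (nu j0 - nu i0)).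

Definition edge_vec kappa mu nu (i0 j0 : 'I_K) : 'I_K -> R :=
  fun j => if j == i0 then lam_star_i0 kappa mu nu i0 j0
           else if j == j0 then 1 - lam_star_i0 kappa mu nu i0 j0
           else 0.
End Defs.

(* Main.v *)
Require Import Defs.
From HB Require Import structures.
From mathcomp Require Import all_boot all_order all_algebra.
From mathcomp Require Import reals.
From mathcomp Require Import ring lra.
Import Order.TTheory GRing.Theory Num.Theory.
Local Open Scope ring_scope.
Set Implicit Arguments. Unset Strict Implicit. Unset Printing Implicit Defensive.
Section Arith.
Variable R : realType.
Variables ki kj p r a b : R.
Definition Fe (t : R) := t * ki + (1-t) * kj - (t * p + (1-t) * r) * (t * a + (1-t) * b).
Definition xs := (kj - r * b - ki + p * a) / (2 * (r - p)) + (a + b) / 2.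
Definition ts := 2^-1 - (kj - r * b - ki + p * a) / (2 * (r - p) * (b - a)).
Definition qe (y : R) := (b - a)^-1 * ((y - a) * (y - b) * (p - r) + (y - a) * (kj - ki - r * b + p * a)) + ki - p * a.
Definition mt := Num.min (Num.max ((kj - r * b - ki + p * a) / (2 * (r - p)) + (a + b) / 2) (Num.min a b)) (Num.max a b).

Lemma clampsq (lo hi x z : R) : lo <= hi -> lo <= x -> x <= hi ->
  (Num.min (Num.max z lo) hi - z)^+2 <= (x - z)^+2.
Proof.
move=> h1 h2 h3.
rewrite maxEle minEle.
have [hz|hz] := leP z lo.
  rewrite h1 !expr2. nra.
rewrite /=; have [hz2|hz2] := leP z hi.
  by rewrite subrr expr2 mul0r sqr_ge0.
rewrite !expr2; nra.
Qed.

Lemma clampin (lo hi z : R) : lo <= hi -> lo <= Num.min (Num.max z lo) hi /\ Num.min (Num.max z lo) hi <= hi.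
Proof.
move=> h1; rewrite maxEle minEle.
have [hz|hz] := leP z lo. rewrite h1. lra.
rewrite /=; have [hz2|hz2] := leP z hi; lra.
Qed.

Lemma minmax_between t : 0 <= t -> t <= 1 ->
  Num.min a b <= b + t * (a - b) /\ b + t * (a - b) <= Num.max a b.
Proof.
move=> t0 t1; rewrite minEle maxEle.
have [h|h] := leP a b; nra.
Qed.

Lemma minmax_le : Num.min a b <= Num.max a b.
Proof. rewrite minEle maxEle; have [h|h] := leP a b; lra. Qed.

Lemma L1 y : a != b -> qe y = Fe ((y - b) / (a - b)).
Proof. move=> ab. have h1: a - b != 0 by rewrite subr_eq0.
have h3: b - a != 0 by rewrite subr_eq0 eq_sym.
rewrite /qe /Fe. field. by rewrite ?h1 ?h3. Qed.

Lemma L2 t : a != b -> p != r -> Fe t = Fe ts - (p - r) * (a - b) * (t - ts)^+2.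
Proof. move=> ab pr. have h1: a - b != 0 by rewrite subr_eq0. have h2: r - p != 0 by rewrite subr_eq0 eq_sym.
have h3: b - a != 0 by rewrite subr_eq0 eq_sym.
rewrite /Fe /ts. field. by rewrite ?h1 ?h2 ?h3. Qed.

Lemma L3 y : a != b -> p != r ->
  Fe ((y-b)/(a-b)) = Fe ts - (p-r)/(a-b) * (y - xs)^+2.
Proof. move=> ab pr. have h1: a - b != 0 by rewrite subr_eq0. have h2: r - p != 0 by rewrite subr_eq0 eq_sym.
have h3: b - a != 0 by rewrite subr_eq0 eq_sym.
rewrite /Fe /ts /xs. field. by rewrite ?h1 ?h2 ?h3. Qed.

Lemma L4 t : Fe t = t * (ki - p * a) + (1 - t) * (kj - r * b) + (p - r) * (a - b) * (t * (1 - t)).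
Proof. rewrite /Fe; ring. Qed.

Lemma A1 t : (p - r) * (a - b) <= 0 -> 0 <= t -> t <= 1 ->
  Fe t <= t * (ki - p * a) + (1 - t) * (kj - r * b).
Proof.
move=> h t0 t1; rewrite L4.
have : 0 <= t * (1 - t) by apply: mulr_ge0; lra.
nra.
Qed.

Lemma nz_of_pos : 0 < (p - r) * (a - b) -> a != b /\ p != r.
Proof.
move=> h; split; apply/negP => /eqP e; move: h; rewrite e subrr ?mulr0 ?mul0r ltxx //.
Qed.

Lemma A2 t : 0 < (p - r) * (a - b) -> 0 <= t -> t <= 1 -> Fe t <= qe mt.
Proof.
move=> h t0 t1; have [ab pr] := nz_of_pos h.
have h1: a - b != 0 by rewrite subr_eq0.
rewrite L1 // L3 //.
have -> : t = ((b + t * (a - b)) - b) / (a - b) by field.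
rewrite L3 //.
have c0 : 0 <= (p - r) / (a - b).
  have -> : (p - r) / (a - b) = (p - r) * (a - b) / ((a - b) ^+ 2) by field.
  by apply: divr_ge0; [apply: ltW | apply: sqr_ge0].
have [m1 m2] := minmax_between t0 t1.
have := clampsq xs minmax_le m1 m2.
rewrite /mt /xs => hs.
rewrite lerD2l lerN2. by apply: ler_wpM2l.
Qed.

Lemma A3 : a != b -> exists t, [/\ 0 <= t, t <= 1 & qe mt = Fe t].
Proof.
move=> ab; exists ((mt - b) / (a - b)); split; last exact: L1.
- have [m1 m2] := clampin ((kj - r * b - ki + p * a) / (2 * (r - p)) + (a + b) / 2) minmax_le.
  move: m1 m2; rewrite -/mt minEle maxEle.
  have [h|h] := leP a b.
    have hab : a < b by rewrite lt_neqAle ab h.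
    move=> m1 m2.
    have -> : (mt - b) / (a - b) = (b - mt) / (b - a).
      have h1: a - b != 0 by rewrite subr_eq0.
      have h3: b - a != 0 by rewrite subr_eq0 eq_sym.
      by rewrite -(opprB mt b) -(opprB a b) invrN mulrNN.
    apply: divr_ge0; lra.
  move=> m1 m2; apply: divr_ge0; lra.
- have [m1 m2] := clampin ((kj - r * b - ki + p * a) / (2 * (r - p)) + (a + b) / 2) minmax_le.
  move: m1 m2; rewrite -/mt minEle maxEle.
  have [h|h] := leP a b.
    have hab : a < b by rewrite lt_neqAle ab h.
    move=> m1 m2.
    have -> : (mt - b) / (a - b) = (b - mt) / (b - a).
      have h1: a - b != 0 by rewrite subr_eq0.
      have h3: b - a != 0 by rewrite subr_eq0 eq_sym.
      by rewrite -(opprB mt b) -(opprB a b) invrN mulrNN.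
    rewrite ler_pdivrMr; lra.
  move=> m1 m2; rewrite ler_pdivrMr; lra.
Qed.

Lemma A4 t V : 0 < (p - r) * (a - b) -> 0 <= t -> t <= 1 -> Fe t = V ->
  ki - p * a < V -> kj - r * b < V -> (forall t', 0 <= t' -> t' <= 1 -> Fe t' <= V) ->
  [/\ 0 <= ts, ts <= 1 & Fe ts = V].
Proof.
move=> h t0 t1 eV hi hj hall; have [ab pr] := nz_of_pos h.
have e0 : Fe 0 = kj - r * b by rewrite /Fe; ring.
have e1 : Fe 1 = ki - p * a by rewrite /Fe; ring.
have Et := L2 t ab pr. have E0 := L2 0 ab pr. have E1 := L2 1 ab pr.
set c := (p - r) * (a - b) in h Et E0 E1.
have s0 : 0 <= ts.
  rewrite leNgt; apply/negP => hs.
  have : 0 <= c * (t * (t - 2 * ts)) by apply: mulr_ge0; [lra| apply: mulr_ge0; lra].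
  move: Et E0; rewrite !expr2; nra.
have s1 : ts <= 1.
  rewrite leNgt; apply/negP => hs.
  have : 0 <= c * ((1 - t) * (2 * ts - t - 1)) by apply: mulr_ge0; [lra| apply: mulr_ge0; lra].
  move: Et E1; rewrite !expr2; nra.
split => //.
apply/eqP; rewrite eq_le hall //=.
have : 0 <= c * (t - ts)^+2 by apply: mulr_ge0; [lra| apply: sqr_ge0].
lra.
Qed.
End Arith.
Section Main.
Variables (R : realType) (K : nat) (mu nu kappa : 'I_K -> R).

Local Notation f := (objective kappa mu nu).

Definition supp (lam : 'I_K -> R) := [set k | lam k != 0].

Definition ev (i j : 'I_K) (t : R) : 'I_K -> R :=
  fun k => if k == i then t else if k == j then 1 - t else 0.

Lemma sum1 (F : 'I_K -> R) i : (forall k, k != i -> F k = 0) -> \sum_(k < K) F k = F i.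
Proof.
move=> h; rewrite (bigD1 i) //= big1 ?addr0 // => k ki; exact: h.
Qed.

Lemma sum2 (F : 'I_K -> R) i j : i != j -> (forall k, k != i -> k != j -> F k = 0) ->
  \sum_(k < K) F k = F i + F j.
Proof.
move=> ij h; rewrite (bigD1 i) //= (bigD1 j) /=; last by rewrite eq_sym.
rewrite big1 ?addr0 ?addrA // => k /andP[ki kj]; exact: h.
Qed.

Lemma sum3 (F : 'I_K -> R) a b c : b != a -> c != a -> c != b ->
  (forall k, k != a -> k != b -> k != c -> F k = 0) ->
  \sum_(k < K) F k = F a + F b + F c.
Proof.
move=> ba ca cb h; rewrite (bigD1 a) //= (bigD1 b) /=; last by [].
rewrite (bigD1 c) /=; last by rewrite ca cb.
rewrite big1 ?addr0 ?addrA // => k /andP[/andP[ka kb] kc]; exact: h.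
Qed.

Lemma dotvD (x y a : 'I_K -> R) s :
  dotv (fun m => x m + s * y m) a = dotv x a + s * dotv y a.
Proof.
rewrite /dotv mulr_sumr -big_split /=; apply: eq_bigr => k _; ring.
Qed.

Lemma dotvDr (x y a : 'I_K -> R) s :
  dotv a (fun m => x m + s * y m) = dotv a x + s * dotv a y.
Proof.
rewrite /dotv mulr_sumr -big_split /=; apply: eq_bigr => k _; ring.
Qed.

Lemma dotvN (x a : 'I_K -> R) : dotv (fun m => - x m) a = - dotv x a.
Proof. rewrite /dotv -sumrN; apply: eq_bigr => k _; ring. Qed.

Lemma dotvNr (x a : 'I_K -> R) : dotv a (fun m => - x m) = - dotv a x.
Proof. rewrite /dotv -sumrN; apply: eq_bigr => k _; ring. Qed.

Lemma f2 (lam : 'I_K -> R) i j : i != j -> (forall k, k != i -> k != j -> lam k = 0) ->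
  lam j = 1 - lam i ->
  f lam = Fe (kappa i) (kappa j) (mu i) (mu j) (nu i) (nu j) (lam i).
Proof.
move=> ij h hj.
have d1 : forall a : 'I_K -> R, dotv lam a = lam i * a i + lam j * a j.
  move=> a; rewrite /dotv (sum2 (F := fun k => lam k * a k) ij) // => k ki kj.
  by rewrite h // mul0r.
have d2 : dotv nu lam = nu i * lam i + nu j * lam j.
  rewrite /dotv (sum2 (F := fun k => nu k * lam k) ij) // => k ki kj.
  by rewrite h // mulr0.
rewrite /objective !d1 d2 hj /Fe; ring.
Qed.

Lemma f1 (lam : 'I_K -> R) i : in_simplex lam -> (forall k, k != i -> lam k = 0) ->
  f lam = vertex_val kappa mu nu i.
Proof.
move=> [hs _] h.
have li : lam i = 1 by rewrite -hs (sum1 (F := lam) h).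
have d1 : forall a : 'I_K -> R, dotv lam a = a i.
  move=> a; rewrite /dotv (sum1 (F := fun k => lam k * a k) (i := i)) ?li ?mul1r //.
  by move=> k ki; rewrite h // mul0r.
have d2 : dotv nu lam = nu i.
  rewrite /dotv (sum1 (F := fun k => nu k * lam k) (i := i)) ?li ?mulr1 //.
  by move=> k ki; rewrite h // mulr0.
by rewrite /objective !d1 d2 /vertex_val.
Qed.

Lemma unit_simplex (i : 'I_K) : in_simplex (unit_vec R i).
Proof.
split.
  rewrite (sum1 (i := i)) /unit_vec ?eqxx // => k ki; by rewrite (negbTE ki).
by move=> k; rewrite /unit_vec; case: ifP => _; rewrite ?ler01 ?lexx.
Qed.

Lemma f_unit (i : 'I_K) : f (unit_vec R i) = vertex_val kappa mu nu i.
Proof.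
apply: f1; first exact: unit_simplex.
by move=> k ki; rewrite /unit_vec (negbTE ki).
Qed.

Lemma ev_simplex i j t : i != j -> 0 <= t -> t <= 1 -> in_simplex (ev i j t).
Proof.
move=> ij t0 t1; split.
  have ji : j != i by rewrite eq_sym.
  rewrite (sum2 ij) /ev.
    by rewrite eqxx (negbTE ji) eqxx addrC subrK.
  by move=> k ki kj; rewrite (negbTE ki) (negbTE kj).
move=> k; rewrite /ev; case: ifP => _ //; case: ifP => _ //; lra.
Qed.

Lemma f_ev i j t : i != j -> f (ev i j t) = Fe (kappa i) (kappa j) (mu i) (mu j) (nu i) (nu j) t.
Proof.
move=> ij; have ji : j != i by rewrite eq_sym.
rewrite (f2 (i := i) (j := j) ij); rewrite /ev ?eqxx ?(negbTE ji) //.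
by move=> k ki kj; rewrite (negbTE ki) (negbTE kj).
Qed.

End Main.
Section Red.
Variables (R : realType) (K : nat) (mu nu kappa : 'I_K -> R).

Local Notation f := (objective kappa mu nu).

Lemma move_dir (lam d : 'I_K -> R) : in_simplex lam -> \sum_(k < K) d k = 0 ->
  dotv d mu = 0 -> (forall k, d k != 0 -> lam k != 0) -> (exists k, d k != 0) ->
  0 <= dotv d kappa - dotv lam mu * dotv nu d ->
  exists lam1, [/\ in_simplex lam1, f lam <= f lam1 & (#|supp lam1| < #|supp lam|)%N].
Proof.
move=> [hs hpos] hd hdmu hsupp [k1 hk1] hL.
have [k0 hk0] : exists k, d k < 0.
  case: (boolP [exists k, d k < 0]) => [/existsP[k hk]|/existsPn hn]; first by exists k.
  have hge : forall k, true -> 0 <= d k by move=> k _; rewrite leNgt; exact: hn.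
  have h0 : forall k, true -> d k = 0 by apply/(psumr_eq0P hge); rewrite hd.
  by move: hk1; rewrite h0 // eqxx.
have [k hk hmin] := arg_minP (P := [pred m | d m < 0]) (fun m => lam m / - d m) hk0.
rewrite /= in hk.
set s := lam k / - d k.
have dk0 : d k != 0 by rewrite lt_eqF.
have ndk : 0 < - d k by rewrite oppr_gt0.
have s0 : 0 <= s by apply: divr_ge0; [exact: hpos | exact: ltW].
exists (fun m => lam m + s * d m); split.
- split.
    by rewrite big_split /= -mulr_sumr hd mulr0 addr0.
  move=> m; case: (ltP (d m) 0) => hm.
    have := hmin m hm; rewrite /= -/s ler_pdivlMr ?oppr_gt0 // => h.
    have -> : s * d m = - (s * - d m) by rewrite mulrN opprK.
    by rewrite subr_ge0.
  by apply: addr_ge0; [exact: hpos | exact: mulr_ge0].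
- rewrite /objective dotvD dotvD dotvDr hdmu mulr0 addr0.
  have : 0 <= s * (dotv d kappa - dotv lam mu * dotv nu d) by exact: mulr_ge0.
  move=> h; rewrite -subr_ge0; move: h.
  have -> : dotv lam kappa + s * dotv d kappa - dotv lam mu * (dotv nu lam + s * dotv nu d) -
    (dotv lam kappa - dotv lam mu * dotv nu lam) = s * (dotv d kappa - dotv lam mu * dotv nu d)
    by ring.
  by [].
- apply: proper_card; apply/properP; split.
    apply/subsetP => m; rewrite !inE; apply: contraNN => /eqP e.
    have dm : d m = 0.
      apply/eqP; case: (boolP (d m == 0)) => // hdm.
      by move: (hsupp m hdm); rewrite e eqxx.
    by rewrite e dm mulr0 addr0.
  exists k; rewrite !inE; first exact: hsupp.
  rewrite negbK /s; apply/eqP; field.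
  exact: dk0.
Qed.

Lemma move_dir2 (lam d : 'I_K -> R) : in_simplex lam -> \sum_(k < K) d k = 0 ->
  dotv d mu = 0 -> (forall k, d k != 0 -> lam k != 0) -> (exists k, d k != 0) ->
  exists lam1, [/\ in_simplex lam1, f lam <= f lam1 & (#|supp lam1| < #|supp lam|)%N].
Proof.
move=> hs hd hdmu hsupp hex.
have [hL|hL] := leP 0 (dotv d kappa - dotv lam mu * dotv nu d).
  exact: (move_dir hs hd hdmu hsupp hex hL).
apply: (move_dir (d := fun m => - d m)) => //.
- by rewrite sumrN hd oppr0.
- by rewrite dotvN hdmu oppr0.
- by move=> k; rewrite oppr_eq0; exact: hsupp.
- by case: hex => k hk; exists k; rewrite oppr_eq0.
- rewrite dotvN dotvNr; lra.
Qed.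

Lemma step (lam : 'I_K -> R) : in_simplex lam -> (3 <= #|supp lam|)%N ->
  exists lam1, [/\ in_simplex lam1, f lam <= f lam1 & (#|supp lam1| < #|supp lam|)%N].
Proof.
move=> hs h3.
have [a ha] : exists a, a \in supp lam.
  by apply/set0Pn; rewrite -card_gt0 (leq_trans _ h3).
have e1 := cardsD1 a (supp lam); rewrite ha in e1.
have [b hb] : exists b, b \in supp lam :\ a.
  by apply/set0Pn; rewrite -card_gt0; move: h3; rewrite e1; case: #|_|.
have e2 := cardsD1 b (supp lam :\ a); rewrite hb in e2.
have [c hc] : exists c, c \in supp lam :\ a :\ b.
  apply/set0Pn; rewrite -card_gt0; move: h3; rewrite e1 e2.
  by case: #|_|.
move: hb hc; rewrite !inE => /andP[ba hb] /andP[cb /andP[ca hc]].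
rewrite inE in ha.
have ab : a != b by rewrite eq_sym.
case: (eqVneq (mu a) (mu b)) => hmu.
  pose d := fun k : 'I_K => if k == a then 1 else if k == b then -1 else (0 : R).
  have dz : forall k, k != a -> k != b -> d k = 0.
    by move=> k ka kb; rewrite /d (negbTE ka) (negbTE kb).
  apply: (move_dir2 (d := d)) => //.
  - rewrite (sum2 ab dz) /d eqxx (negbTE ba) eqxx; ring.
  - rewrite /dotv (sum2 (F := fun k => d k * mu k) ab).
      by rewrite /d eqxx (negbTE ba) eqxx hmu; ring.
    by move=> k ka kb; rewrite dz // mul0r.
  - move=> k; rewrite /d; case: ifP => [/eqP -> //|_].
    by case: ifP => [/eqP -> //|_]; rewrite eqxx.
  - by exists a; rewrite /d eqxx oner_eq0.
pose d := fun k : 'I_K => if k == a then mu b - mu c else if k == b then mu c - mu a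
  else if k == c then mu a - mu b else (0 : R).
have dz : forall k, k != a -> k != b -> k != c -> d k = 0.
  by move=> k ka kb kc; rewrite /d (negbTE ka) (negbTE kb) (negbTE kc).
have da : d a = mu b - mu c by rewrite /d eqxx.
have db : d b = mu c - mu a by rewrite /d (negbTE ba) eqxx.
have dc : d c = mu a - mu b by rewrite /d (negbTE ca) (negbTE cb) eqxx.
apply: (move_dir2 (d := d)) => //.
- rewrite (sum3 ba ca cb dz) da db dc; ring.
- rewrite /dotv (sum3 (F := fun k => d k * mu k) ba ca cb).
    by rewrite da db dc; ring.
  by move=> k ka kb kc; rewrite dz // mul0r.
- move=> k; rewrite /d; case: ifP => [/eqP -> //|_].
  case: ifP => [/eqP -> //|_].
  by case: ifP => [/eqP -> //|_]; rewrite eqxx.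
- by exists c; rewrite dc subr_eq0.
Qed.

Lemma small (lam : 'I_K -> R) : in_simplex lam -> (#|supp lam| <= 2)%N ->
  exists i j : 'I_K, (i <= j)%N /\ (forall k, k != i -> k != j -> lam k = 0).
Proof.
move=> [hs hpos] h2.
have [i hi] : exists i, i \in supp lam.
  apply/set0Pn; apply/negP => /eqP e.
  have : \sum_(k < K) lam k = 0.
    apply: big1 => k _; apply/eqP; apply/negPn; apply/negP => hk.
    by have : k \in supp lam by [rewrite inE]; rewrite e inE.
  by rewrite hs => /eqP; rewrite oner_eq0.
have e1 := cardsD1 i (supp lam); rewrite hi in e1.
have key : forall j, (forall k, k != i -> k != j -> lam k = 0) ->
    exists i j : 'I_K, (i <= j)%N /\ (forall k, k != i -> k != j -> lam k = 0).
  move=> j hj; case: (leqP i j) => hij; first by exists i, j.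
  by exists j, i; split; [exact: ltnW | move=> k kj ki; exact: hj].
case: (set_0Vmem (supp lam :\ i)) => [e|[j hj]].
  apply: (key i) => k ki _; apply/eqP; apply/negPn; apply/negP => hk.
  have : k \in supp lam :\ i by rewrite !inE ki hk.
  by rewrite e inE.
apply: (key j) => k ki kj; apply/eqP; apply/negPn; apply/negP => hk.
have e2 := cardsD1 j (supp lam :\ i); rewrite hj in e2.
have : k \in supp lam :\ i :\ j by rewrite !inE ki kj hk.
have : #|supp lam :\ i :\ j| == 0%N by move: h2; rewrite e1 e2; case: #|_|.
by rewrite cards_eq0 => /eqP ->; rewrite inE.
Qed.

Lemma reduce n (lam : 'I_K -> R) : (#|supp lam| <= n)%N -> in_simplex lam ->
  exists lam', [/\ in_simplex lam', f lam <= f lam' &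
    exists i j : 'I_K, (i <= j)%N /\ (forall k, k != i -> k != j -> lam' k = 0)].
Proof.
elim: n lam => [|n IH] lam hn hs.
  exists lam; split => //; apply: small => //; exact: leq_trans hn _.
case: (leqP #|supp lam| 2) => h2.
  by exists lam; split => //; apply: small.
have [lam1 [hs1 hf1 hc1]] := step hs h2.
have hc2 : (#|supp lam1| <= n)%N by rewrite -ltnS (leq_trans hc1 hn).
have [lam' [hs' hf' hex]] := IH lam1 hc2 hs1.
by exists lam'; split => //; exact: le_trans hf'.
Qed.

End Red.

Lemma conv_eq (R : realType) (V x y t : R) : 0 <= t -> t <= 1 -> x <= V -> y <= V ->
  V <= t * x + (1 - t) * y -> V = x \/ V = y.
Proof.
move=> t0 t1 hx hy h.
case: (eqVneq V x) => [->|nx]; first by left.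
case: (eqVneq V y) => [->|ny]; first by right.
have lx : x < V by rewrite lt_neqAle eq_sym nx hx.
have ly : y < V by rewrite lt_neqAle eq_sym ny hy.
exfalso.
have h2 : 0 <= (1 - t) * (V - y) by apply: mulr_ge0; lra.
case: (eqVneq t 0) => [t00|tn0].
  by move: h; rewrite t00; lra.
have tp : 0 < t by rewrite lt_neqAle eq_sym tn0 t0.
have h1 : 0 < t * (V - x) by apply: mulr_gt0; lra.
have e : t * x + (1 - t) * y = V - (t * (V - x) + (1 - t) * (V - y)) by ring.
by move: h; rewrite e; lra.
Qed.

Section Final.
Variables (R : realType) (K : nat) (mu nu kappa : 'I_K -> R).

Lemma Qeq (i j : 'I_K) : (mu i != mu j) && (nu i != nu j) ->
  q_fun kappa mu nu i j (mu_tilde kappa mu nu i j) =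
  qe (kappa i) (kappa j) (mu i) (mu j) (nu i) (nu j)
     (mt (kappa i) (kappa j) (mu i) (mu j) (nu i) (nu j)).
Proof. by move=> c; rewrite /q_fun /mu_tilde c. Qed.

Lemma Qeq2 (i j : 'I_K) : ~~ ((mu i != mu j) && (nu i != nu j)) ->
  q_fun kappa mu nu i j (mu_tilde kappa mu nu i j) = vertex_val kappa mu nu i.
Proof. by move=> c; rewrite /q_fun (negbTE c). Qed.

Lemma main_thm (V : R) :
  (0 < K)%N ->
  is_max_on_simplex (objective kappa mu nu) V ->
  [/\ is_max_candidates (vertex_val kappa mu nu)
        (fun i j => q_fun kappa mu nu i j (mu_tilde kappa mu nu i j)) V,
      (forall i0 : 'I_K, V = vertex_val kappa mu nu i0 ->
         optimal_point (objective kappa mu nu) V (unit_vec R i0)) &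
      ((~ exists i0 : 'I_K, V = vertex_val kappa mu nu i0) ->
         exists i0 j0 : 'I_K,
           [/\ (i0 < j0)%N,
               V = q_fun kappa mu nu i0 j0 (mu_tilde kappa mu nu i0 j0) &
               optimal_point (objective kappa mu nu) V
                 (edge_vec kappa mu nu i0 j0)])].
Proof.
move=> K0 [[ls [hls hfls]] hmax].
have vle : forall i, vertex_val kappa mu nu i <= V.
  by move=> i; rewrite -(f_unit mu nu kappa i); apply: hmax; apply: unit_simplex.
have Qle : forall i j : 'I_K, q_fun kappa mu nu i j (mu_tilde kappa mu nu i j) <= V.
  move=> i j; case: (boolP ((mu i != mu j) && (nu i != nu j))) => c; last by rewrite Qeq2.
  rewrite Qeq //; move/andP: c => [cm cn].
  have ij : i != j by apply: contraNneq cm => ->.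
  have [t [t0 t1 ->]] := A3 (kappa i) (kappa j) (mu i) (mu j) cn.
  rewrite -(f_ev mu nu kappa t ij); apply: hmax; exact: ev_simplex.
have KEY : (exists i, V = vertex_val kappa mu nu i) \/
    exists i j : 'I_K, [/\ (i < j)%N, 0 < (mu i - mu j) * (nu i - nu j) &
      exists t, [/\ 0 <= t, t <= 1 &
        Fe (kappa i) (kappa j) (mu i) (mu j) (nu i) (nu j) t = V]].
  have [lam' [hs' hf' [i [j [hij hz]]]]] := reduce mu nu kappa (leqnn #|supp ls|) hls.
  have fV : objective kappa mu nu lam' = V.
    by apply/eqP; rewrite eq_le hmax //= -hfls.
  case: (eqVneq i j) => [eij|nij].
    left; exists i; rewrite -fV; apply: f1 => // k ki; apply: hz => //; by rewrite -eij.
  have hlt : (i < j)%N by rewrite ltn_neqAle nij hij.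
  have hsum : lam' i + lam' j = 1.
    by case: hs' => hs _; rewrite -hs (sum2 nij).
  have ej : lam' j = 1 - lam' i by rewrite -hsum addrC addKr.
  have t0 : 0 <= lam' i by case: hs'.
  have t1 : lam' i <= 1 by have := (hs'.2 j); lra.
  have hF := f2 mu nu kappa nij hz ej; rewrite fV in hF.
  have [hc|hc] := leP ((mu i - mu j) * (nu i - nu j)) 0.
    left; have := A1 (kappa i) (kappa j) hc t0 t1; rewrite -hF => h.
    by case: (conv_eq t0 t1 (vle i) (vle j) h) => ->; [exists i | exists j].
  right; exists i, j; split => //; exists (lam' i); split => //.
have QV : forall i j : 'I_K, 0 < (mu i - mu j) * (nu i - nu j) ->
    forall t, 0 <= t -> t <= 1 -> Fe (kappa i) (kappa j) (mu i) (mu j) (nu i) (nu j) t = V ->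
    V = q_fun kappa mu nu i j (mu_tilde kappa mu nu i j).
  move=> i j hc t t0 t1 hF.
  have [ab pr] := nz_of_pos hc.
  apply/eqP; rewrite eq_le Qle /= Qeq; last by rewrite pr ab.
  by rewrite -hF andbT; exact: (A2 (kappa i) (kappa j) hc t0 t1).
split.
- split => //.
  case: KEY => [[i ->]|[i [j [hij hc [t [t0 t1 hF]]]]]]; first by left; exists i.
  right; exists i, j; split; first exact: ltnW.
  exact: QV hc t t0 t1 hF.
- move=> i0 e; split; first exact: unit_simplex.
  by rewrite f_unit e.
- move=> hnv; case: KEY => [//|[i [j [hij hc [t [t0 t1 hF]]]]]].
  have nij : i != j by rewrite neq_ltn hij.
  exists i, j; split => //; first exact: QV hc t t0 t1 hF.
  have hi : kappa i - mu i * nu i < V.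
    rewrite lt_neqAle vle andbT; apply/eqP => e; apply: hnv; exists i; by rewrite -e.
  have hj : kappa j - mu j * nu j < V.
    rewrite lt_neqAle vle andbT; apply/eqP => e; apply: hnv; exists j; by rewrite -e.
  have hall : forall t', 0 <= t' -> t' <= 1 ->
      Fe (kappa i) (kappa j) (mu i) (mu j) (nu i) (nu j) t' <= V.
    move=> t' u0 u1; rewrite -(f_ev mu nu kappa t' nij); apply: hmax; exact: ev_simplex.
  have [s0 s1 hs] := A4 hc t0 t1 hF hi hj hall.
  have -> : edge_vec kappa mu nu i j =
    ev i j (ts (kappa i) (kappa j) (mu i) (mu j) (nu i) (nu j)) by [].
  split; first exact: ev_simplex.
  by rewrite f_ev.
Qed.

End Final.

Theorem theorem5p3 (R : realType) (K : nat) (mu nu kappa : 'I_K -> R) (V : R) :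
  (0 < K)%N ->
  is_max_on_simplex (objective kappa mu nu) V ->
  [/\ is_max_candidates (vertex_val kappa mu nu)
        (fun i j => q_fun kappa mu nu i j (mu_tilde kappa mu nu i j)) V,
      (forall i0 : 'I_K, V = vertex_val kappa mu nu i0 ->
         optimal_point (objective kappa mu nu) V (unit_vec R i0)) &
      ((~ exists i0 : 'I_K, V = vertex_val kappa mu nu i0) ->
         exists i0 j0 : 'I_K,
           [/\ (i0 < j0)%N,
               V = q_fun kappa mu nu i0 j0 (mu_tilde kappa mu nu i0 j0) &
               optimal_point (objective kappa mu nu) V
                 (edge_vec kappa mu nu i0 j0)])].
Proof. exact: main_thm. Qed.
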